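(* Let $(H,\mathcal{P}=\{P_h\}_{h\in[H]},r)$ and $(H,\widehat{\mathcal{P}}=\{\widehat P_h\}_{h\in[H]},r)$ be two episodic MDPs with the same state space $\mathcal{S}$, action space $\mathcal{A}$, initial state $s_1$ and reward distributions $r$. For any fixed $c\in[0,1]$ and any augmented policy $\pi=\{\pi_h:\mathcal{S}\times[0,H]\to\Delta(\mathcal{A})\}_{h\in[H]}$, $$V_{1,\mathcal{P},0}^\pi(s_1,c)-V_{1,\widehat{\mathcal{P}},0}^\pi(s_1,c)\le H\cdot\sum_{h=1}^H \mathbb{E}_{(s,a)\sim d_{h,\mathcal{P}}^{(\pi,c)}}\left[f_h(s,a)\right],$$ where $f_h(s,a)=\|P_h(\cdot\mid s,a)-\widehat P_h(\cdot\mid s,a)\|_1$.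
   Context: Rewards $r_h(s,a)$ are distributions on $[0,1]$. In the augmented MDP the state is $(s,c)$ with remaining budget $c$, updated by $c_{h+1}=c_h-r_h$ after receiving reward $r_h$; an augmented policy chooses $a_h\sim\pi_h(\cdot\mid s_h,c_h)$. For a transition kernel family $\mathcal{P}$, $V^\pi_{1,\mathcal{P},0}(s_1,c)=\mathbb{E}_{\pi,\mathcal{P}}[(c-\sum_{h=1}^H r_h)^+\mid c_1=c]$ with $x^+=\max(x,0)$. $d^{(\pi,c)}_{h,\mathcal{P}}(s,a)$ is the probability that $(s_h,a_h)=(s,a)$ when running $\pi$ from $(s_1,c)$ under $\mathcal{P}$. *)

(* Defs.v *)
From HB Require Import structures.
From mathcomp Require Import all_boot all_order all_algebra.
From mathcomp Require Import all_classical all_reals all_analysis.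
Set Implicit Arguments. Unset Strict Implicit. Unset Printing Implicit Defensive.
Import Order.TTheory GRing.Theory Num.Theory.
Import numFieldNormedType.Exports.
Local Open Scope classical_set_scope.
Local Open Scope ring_scope.

(* Episodic MDP with finite state space S, finite action space A, horizon H,
   steps indexed h = 1..H.
   - P h s a s'  : transition probability P_h(s' | s, a)
   - r h s a     : reward distribution (probability measure on R, supported on [0,1])
   - pi h s c a  : augmented policy pi_h(a | s, c), c = remaining budget.
   The augmented process: from (s_h, c_h), draw a_h ~ pi_h(.|s_h,c_h),
   reward r_h ~ r h s_h a_h, next state s_{h+1} ~ P_h(.|s_h,a_h),
   and c_{h+1} = c_h - r_h. *)

Section AugMDP.
Variables (R : realType) (S A : finType) (H : nat).
Variables (P : nat -> S -> A -> S -> R)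
          (r : nat -> S -> A -> probability R R)
          (pi : nat -> S -> R -> A -> R).

(* augV n s c = E[(c_{H-n+1} - sum_{h=H-n+1}^H r_h)^+ | s_{H-n+1} = s, c_{H-n+1} = c],
   i.e. the value V^pi_{H-n+1,P,0}(s,c) with n steps remaining. *)
Fixpoint augV (n : nat) (s : S) (c : R) : R :=
  match n with
  | 0 => Num.max c 0
  | n'.+1 =>
      let h := (H - n')%N in
      \sum_(a : A) pi h s c a *
        \sum_(s' : S) P h s a s' *
          Rintegral (r h s a) setT (fun x => augV n' s' (c - x))
  end.

(* augOcc h0 s0 a0 n s c = probability that (s_{h0}, a_{h0}) = (s0, a0) when the
   augmented process is run from state (s, c) at step H-n+1 (for H-n+1 <= h0). *)
Fixpoint augOcc (h0 : nat) (s0 : S) (a0 : A) (n : nat) (s : S) (c : R) : R :=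
  match n with
  | 0 => 0
  | n'.+1 =>
      let h := (H - n')%N in
      if h == h0 then (if s == s0 then pi h s c a0 else 0)
      else
      \sum_(a : A) pi h s c a *
        \sum_(s' : S) P h s a s' *
          Rintegral (r h s a) setT (fun x => augOcc h0 s0 a0 n' s' (c - x))
  end.

End AugMDP.

Definition V1 (R : realType) (S A : finType) (H : nat)
  (P : nat -> S -> A -> S -> R) (r : nat -> S -> A -> probability R R)
  (pi : nat -> S -> R -> A -> R) (s1 : S) (c : R) : R :=
  augV H P r pi H s1 c.

Definition occ (R : realType) (S A : finType) (H : nat)
  (P : nat -> S -> A -> S -> R) (r : nat -> S -> A -> probability R R)
  (pi : nat -> S -> R -> A -> R) (s1 : S) (c : R) (h : nat) (s : S) (a : A) : R :=
  augOcc H P r pi h s a H s1 c.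

Definition is_kernel (R : realType) (S A : finType) (H : nat)
  (P : nat -> S -> A -> S -> R) : Prop :=
  forall h, (0 < h <= H)%N -> forall s a,
    (forall s', 0 <= P h s a s') /\ \sum_(s' : S) P h s a s' = 1.

Definition is_aug_policy (R : realType) (S A : finType) (H : nat)
  (pi : nat -> S -> R -> A -> R) : Prop :=
  forall h, (0 < h <= H)%N -> forall s,
    (forall c a, 0 <= pi h s c a) /\ (forall c, \sum_(a : A) pi h s c a = 1) /\
    (forall a, measurable_fun setT (fun c => pi h s c a)).

(* Main.v *)
Require Import Defs.
From HB Require Import structures.
From mathcomp Require Import all_boot all_order all_algebra.
From mathcomp Require Import all_classical all_reals all_analysis.
From mathcomp Require Import measurable_realfun.
From mathcomp Require Import zify ring.
Import Order.TTheory GRing.Theory Num.Theory.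
Import numFieldNormedType.Exports.
Local Open Scope classical_set_scope.
Local Open Scope ring_scope.

Section Gen.
Context {R : realType}.
Definition D01 : set R := [set x : R | 0 <= x <= 1].


Lemma mD01 : measurable D01.
Proof.
have -> : D01 = `[0%R, 1%R]%classic.
  by apply/seteqP; split => x /=; rewrite in_itv.
exact: measurable_itv.
Qed.

Definition good (f : R -> R) := measurable_fun setT f /\ exists M, forall x, D01 x -> `|f x| <= M.

Variable mu : probability R R.
Hypothesis mu01 : mu D01 = 1%E.

Lemma muC : mu (~` D01) = 0%E.
Proof. by rewrite probability_setC; [rewrite mu01 subee | exact: mD01]. Qed.

Lemma good_int f : good f -> mu.-integrable D01 (EFin \o f).
Proof.
move=> [mf [M hM]].
apply: (@le_integrable _ _ _ _ _ mD01 _ (EFin \o cst M)).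
- apply/measurable_realfun.measurable_EFinP; exact: (measurable_funS measurableT (@subsetT _ _) mf).
- move=> x Dx /=; rewrite lee_fin; apply: (le_trans (hM x Dx)).
  exact: ler_norm.
- exact: finite_measure_integrable_cst mD01.
Qed.

Lemma good_R01 f : good f -> Rintegral mu setT f = Rintegral mu D01 f.
Proof.
move=> gf; have [mf _] := gf.
have mC := measurableC mD01.
rewrite /Rintegral (negligible_integral (N := ~` D01)) //; try exact: muC.
- by rewrite setTD setCK.
- rewrite (negligible_integrable (N := ~` D01)) //; try exact: muC.
  + by rewrite setTD setCK; exact: good_int.
  + exact/measurable_realfun.measurable_EFinP.
Qed.

Lemma conv_meas (F : R -> R) : measurable_fun setT F -> (forall x, 0 <= F x) ->
  measurable_fun setT (fun c : R => Rintegral mu setT (fun x => F (c - x))).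
Proof.
move=> mF F0.
have mg : measurable_fun [set: R * R] ((fun p : R * R => (F (p.1 - p.2))%:E) : R * R -> \bar R).
  apply/measurable_realfun.measurable_EFinP.
  apply: (measurableT_comp mF).
  exact: (measurable_realfun.measurable_funB measurable_fst measurable_snd).
have h := measurable_fun_fubini_tonelli_F (m2 := mu) _ mg (fun p => ltac:(by rewrite /= lee_fin F0)).
exact: (measurableT_comp (fine_measurable measurableT) h).
Qed.

Lemma good_sub (G : R -> R) y M : measurable_fun setT G ->
  (forall x, D01 x -> `|G (y - x)| <= M) -> good (fun x => G (y - x)).
Proof.
move=> mG hM; split; last by exists M.
have h : measurable_fun setT (fun x : R => y - x) := measurable_funB (measurable_cst y) (@measurable_id _ _ _).
exact: (measurableT_comp mG h).
Qed.

Lemma good0 : good (fun _ => 0).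
Proof. by split; [exact: measurable_cst | exists 0 => x _; rewrite normr0]. Qed.

Lemma good_add f g : good f -> good g -> good (fun x => f x + g x).
Proof.
move=> [mf [Mf hf]] [mg [Mg hg]]; split; first exact: measurable_funD.
exists (Mf + Mg) => x Dx; apply: (le_trans (ler_normD _ _)); exact: lerD (hf x Dx) (hg x Dx).
Qed.

Lemma good_scale f k : good f -> good (fun x => f x * k).
Proof.
move=> [mf [Mf hf]]; split; first exact: (measurable_funM mf (measurable_cst k)).
exists (Mf * `|k|) => x Dx; rewrite normrM; by rewrite ler_wpM2r // hf.
Qed.

Lemma good_sum (I : Type) (s : seq I) (Pr : pred I) (F : I -> R -> R) :
  (forall i, good (F i)) -> good (fun x => \sum_(i <- s | Pr i) F i x).
Proof.
move=> gF; elim: s => [|i s IH].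
  by rewrite (_ : (fun _ => _) = fun _ => 0); [exact: good0 | apply/funext => x; rewrite big_nil].
rewrite (_ : (fun _ => _) = fun x => if Pr i then F i x + \sum_(j <- s | Pr j) F j x
   else \sum_(j <- s | Pr j) F j x); last by apply/funext => x; rewrite big_cons.
by case: (Pr i) => //; exact: good_add.
Qed.

Lemma good_scalel f k : good f -> good (fun x => k * f x).
Proof.
move=> gf; rewrite (_ : (fun x => k * f x) = fun x => f x * k); first exact: good_scale.
by apply/funext => x; rewrite mulrC.
Qed.

Lemma good_B f g : good f -> good g -> good (fun x => f x - g x).
Proof.
move=> gf gg; rewrite (_ : (fun x => f x - g x) = fun x => f x + g x * (-1)).
  exact/good_add/good_scale.
by apply/funext => x; rewrite mulrN1.
Qed.

Lemma Rint0 (D : set R) : measurable D -> Rintegral mu D (fun _ => 0) = 0.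
Proof. by move=> mD; rewrite Rintegral_cst // mul0r. Qed.

Lemma Rint_sum (I : Type) (s : seq I) (Pr : pred I) (F : I -> R -> R) :
  (forall i, good (F i)) ->
  Rintegral mu D01 (fun x => \sum_(i <- s | Pr i) F i x) =
  \sum_(i <- s | Pr i) Rintegral mu D01 (F i).
Proof.
move=> gF; elim: s => [|i s IH].
  rewrite big_nil (_ : (fun _ => _) = fun _ => 0); first exact: Rint0 mD01.
  by apply/funext => x; rewrite big_nil.
rewrite big_cons (_ : (fun _ => _) = fun x => if Pr i then F i x + \sum_(j <- s | Pr j) F j x
   else \sum_(j <- s | Pr j) F j x); last by apply/funext => x; rewrite big_cons.
case: (Pr i) => //.
rewrite RintegralD ?IH //; first exact: mD01.
  exact: good_int.
exact/good_int/good_sum.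
Qed.
End Gen.

Lemma maxle {R : realType} (c x : R) : 0 <= x -> Num.max (c - x) 0 <= Num.max c 0.
Proof.
move=> x0; rewrite ge_max !le_max lexx !orbT andbT.
by rewrite lerBlDr lerDl x0.
Qed.

Lemma convex_le {R : realType} (I : finType) (w x : I -> R) M :
  (forall i, 0 <= w i) -> \sum_i w i = 1 -> (forall i, x i <= M) ->
  \sum_i w i * x i <= M.
Proof.
move=> w0 w1 xM; apply: (le_trans (y := \sum_i w i * M)).
  by apply: ler_sum => i _; rewrite ler_wpM2l.
by rewrite -big_distrl /= w1 mul1r.
Qed.

Lemma convex_ge0 {R : realType} (I : finType) (w x : I -> R) :
  (forall i, 0 <= w i) -> (forall i, 0 <= x i) -> 0 <= \sum_i w i * x i.
Proof. by move=> w0 x0; apply: sumr_ge0 => i _; rewrite mulr_ge0. Qed.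

Lemma le_sum1 {R : realType} (I : finType) (w : I -> R) j :
  (forall i, 0 <= w i) -> w j <= \sum_i w i.
Proof.
move=> w0; rewrite (bigD1 j) //= lerDl; exact: sumr_ge0.
Qed.

Section MDP.
Variables (R : realType) (S A : finType) (H : nat).
Variables (r : nat -> S -> A -> probability R R) (pi : nat -> S -> R -> A -> R).
Hypothesis hr : forall h, (0 < h <= H)%N -> forall s a, r h s a D01 = 1%E.
Hypothesis hpi : is_aug_policy H pi.

Lemma augV_S K n s y : augV H K r pi n.+1 s y =
  \sum_a pi (H - n)%N s y a * \sum_s' K (H - n)%N s a s' *
     Rintegral (r (H - n)%N s a) setT (fun x => augV H K r pi n s' (y - x)).
Proof. by []. Qed.

Lemma augOcc_S K h0 s0 a0 n s y : augOcc H K r pi h0 s0 a0 n.+1 s y =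
  if (H - n)%N == h0 then (if s == s0 then pi (H - n)%N s y a0 else 0) else
  \sum_a pi (H - n)%N s y a * \sum_s' K (H - n)%N s a s' *
     Rintegral (r (H - n)%N s a) setT (fun x => augOcc H K r pi h0 s0 a0 n s' (y - x)).
Proof. by []. Qed.

Lemma hstep n : (n.+1 <= H)%N -> (0 < H - n <= H)%N.
Proof. move=> hn; apply/andP; split; [rewrite subn_gt0 // | exact: leq_subr]. Qed.

Section Kern.
Variable K : nat -> S -> A -> S -> R.
Hypothesis hK : is_kernel H K.

Lemma V_props n : (n <= H)%N -> forall s,
  measurable_fun setT (augV H K r pi n s) /\
  forall c, 0 <= augV H K r pi n s c <= Num.max c 0.
Proof.
elim: n => [|n IH] hn s.
  split; first by rewrite (_ : augV H K r pi 0 s = (@id R) \max (cst 0)); [apply: measurable_maxr | apply/funext].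

  move=> c /=. rewrite lexx andbT le_max lexx orbT//.
have hn' : (n <= H)%N by apply: ltnW.
have hh := @hstep n hn.
have [pi0 [pi1 mpi]] := hpi _ hh s.
have IHs := IH hn'.
have Ib : forall a s' c, 0 <= Rintegral (r (H - n)%N s a) setT (fun x => augV H K r pi n s' (c - x)) <= Num.max c 0.
  move=> a s' c; have [mV bV] := IHs s'.
  have g : good (fun x => augV H K r pi n s' (c - x)).
    apply: (@good_sub _ _ _ (Num.max c 0)) => // x /andP[x0 x1].
    have /andP[b0 b1] := bV (c - x); rewrite ger0_norm //.
    exact: (le_trans b1 (maxle _ _ x0)).
  rewrite (@good_R01 _ _ (hr _ hh s a) _ g).
  apply/andP; split; first by apply: Rintegral_ge0 => x _; have /andP[] := bV (c - x).
  apply: (le_trans (y := Rintegral (r (H - n)%N s a) D01 (fun _ => Num.max c 0))).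
    apply: le_Rintegral; first exact: mD01.
    - exact/good_int.
    - exact: finite_measure_integrable_cst mD01.
    move=> x /andP[x0 x1]; have /andP[_ b1] := bV (c - x).
    exact: (le_trans b1 (maxle _ _ x0)).
  rewrite Rintegral_cst; last exact: mD01.
  rewrite (_ : fine _ = 1) ?mulr1 //; exact: (congr1 fine (hr _ hh s a)).
split.
  rewrite (_ : augV H K r pi n.+1 s = fun y => \sum_a pi (H - n)%N s y a * \sum_s' K (H - n)%N s a s' *
     Rintegral (r (H - n)%N s a) setT (fun x => augV H K r pi n s' (y - x))); last first.
    by apply/funext => y; rewrite augV_S.
  apply: measurable_sum => a; apply: measurable_funM; first exact: mpi.
  apply: measurable_sum => s'; apply: measurable_funM; first exact: measurable_cst.
  apply: conv_meas; first by have [] := IHs s'.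
  by move=> x; have [_ /(_ x) /andP[]] := IHs s'.
move=> c; rewrite augV_S; apply/andP; split.
  apply: convex_ge0 => // a; have [K0 K1] := hK _ hh s a.
  by apply: convex_ge0 => // s'; have /andP[] := Ib a s' c.
apply: convex_le => // a; have [K0 K1] := hK _ hh s a.
by apply: convex_le => // s'; have /andP[] := Ib a s' c.
Qed.


Lemma O_props n : (n <= H)%N -> forall h0 s0 a0 s,
  measurable_fun setT (augOcc H K r pi h0 s0 a0 n s) /\
  forall c, 0 <= augOcc H K r pi h0 s0 a0 n s c <= 1.
Proof.
elim: n => [|n IH] hn h0 s0 a0 s.
  split; first exact: measurable_cst.
  by move=> c /=; rewrite lexx ler01.
have hn' : (n <= H)%N by apply: ltnW.
have hh := @hstep n hn.
have [pi0 [pi1 mpi]] := hpi _ hh s.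
have IHs := IH hn' h0 s0 a0.
have Ib : forall a s' c, 0 <= Rintegral (r (H - n)%N s a) setT
    (fun x => augOcc H K r pi h0 s0 a0 n s' (c - x)) <= 1.
  move=> a s' c; have [mV bV] := IHs s'.
  have g : good (fun x => augOcc H K r pi h0 s0 a0 n s' (c - x)).
    apply: (@good_sub _ _ _ 1) => // x /andP[x0 x1].
    by have /andP[b0 b1] := bV (c - x); rewrite ger0_norm.
  rewrite (@good_R01 _ _ (hr _ hh s a) _ g).
  apply/andP; split; first by apply: Rintegral_ge0 => x _; have /andP[] := bV (c - x).
  apply: (le_trans (y := Rintegral (r (H - n)%N s a) D01 (fun _ => 1))).
    apply: le_Rintegral; first exact: mD01.
    - exact/good_int.
    - exact: finite_measure_integrable_cst mD01.
    by move=> x _; have /andP[_ b1] := bV (c - x).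
  rewrite Rintegral_cst; last exact: mD01.
  rewrite (_ : fine _ = 1) ?mulr1 //; exact: (congr1 fine (hr _ hh s a)).
split.
  rewrite (_ : augOcc H K r pi h0 s0 a0 n.+1 s = fun y =>
    if (H - n)%N == h0 then (if s == s0 then pi (H - n)%N s y a0 else 0) else
    \sum_a pi (H - n)%N s y a * \sum_s' K (H - n)%N s a s' *
     Rintegral (r (H - n)%N s a) setT (fun x => augOcc H K r pi h0 s0 a0 n s' (y - x))); last first.
    by apply/funext => y; rewrite augOcc_S.
  case: eqP => _; first by case: eqP => _; [exact: mpi | exact: measurable_cst].
  apply: measurable_sum => a; apply: measurable_funM; first exact: mpi.
  apply: measurable_sum => s'; apply: measurable_funM; first exact: measurable_cst.
  apply: conv_meas; first by have [] := IHs s'.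
  by move=> x; have [_ /(_ x) /andP[]] := IHs s'.
move=> c; rewrite augOcc_S.
case: eqP => _.
  case: eqP => _; last by rewrite lexx ler01.
  by rewrite pi0 /= -(pi1 c); apply: le_sum1.
apply/andP; split.
  apply: convex_ge0 => // a; have [K0 K1] := hK _ hh s a.
  by apply: convex_ge0 => // s'; have /andP[] := Ib a s' c.
apply: convex_le => // a; have [K0 K1] := hK _ hh s a.
by apply: convex_le => // s'; have /andP[] := Ib a s' c.
Qed.

Lemma O_zero h0 s0 a0 n : (h0 + n <= H)%N -> forall s c,
  augOcc H K r pi h0 s0 a0 n s c = 0.
Proof.
elim: n => [|n IH] hn s c //.
rewrite augOcc_S.
have -> : ((H - n)%N == h0) = false by apply/eqP; lia.
apply: big1 => a _; rewrite (_ : \sum_s' _ = 0) ?mulr0 //.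
apply: big1 => s' _.
rewrite (_ : (fun x => _) = fun _ => 0); last first.
  apply/funext => x; apply: IH; lia.
by rewrite Rint0 ?mulr0.
Qed.

End Kern.

Lemma swap_lin (I : finType) (w : I -> R) (G : I -> nat -> S -> A -> R) :
  \sum_i w i * (\sum_(1 <= h < H.+1) \sum_s0 \sum_a0 G i h s0 a0) =
  \sum_(1 <= h < H.+1) \sum_s0 \sum_a0 (\sum_i w i * G i h s0 a0).
Proof.
under eq_bigr do rewrite mulr_sumr.
rewrite exchange_big; apply: eq_bigr => h _.
under eq_bigr do rewrite mulr_sumr.
rewrite exchange_big; apply: eq_bigr => s0 _.
under eq_bigr do rewrite mulr_sumr.
by rewrite exchange_big.
Qed.

Section Main.
Variables P Q : nat -> S -> A -> S -> R.
Hypothesis hP : is_kernel H P.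
Hypothesis hQ : is_kernel H Q.

Definition fd h s a := \sum_s' `|P h s a s' - Q h s a s'|.
Definition Kf n s y := \sum_(1 <= h < H.+1) \sum_s0 \sum_a0
   augOcc H P r pi h s0 a0 n s y * fd h s0 a0.

Lemma fd_ge0 h s a : 0 <= fd h s a.
Proof. by apply: sumr_ge0 => i _. Qed.

Lemma gO n (hn : (n <= H)%N) h0 s0 a0 s' y : good (fun x => augOcc H P r pi h0 s0 a0 n s' (y - x)).
Proof.
have [mO bO] := @O_props P hP _ hn h0 s0 a0 s'.
apply: (@good_sub _ _ _ 1) => // x _.
by have /andP[b0 b1] := bO (y - x); rewrite ger0_norm.
Qed.

Lemma gKf n (hn : (n <= H)%N) s' y : good (fun x => Kf n s' (y - x)).
Proof.
apply: good_sum => h0; apply: good_sum => s0; apply: good_sum => a0.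
exact/good_scale/gO.
Qed.

Lemma Kf_ge0 n (hn : (n <= H)%N) s y : 0 <= Kf n s y.
Proof.
apply: sumr_ge0 => h0 _; apply: sumr_ge0 => s0 _; apply: sumr_ge0 => a0 _.
apply: mulr_ge0; last exact: fd_ge0.
by have [_ /(_ y) /andP[]] := @O_props P hP _ hn h0 s0 a0 s.
Qed.


Lemma Jexp n (hn : (n <= H)%N) (mu : probability R R) (mu01 : mu D01 = 1%E) s' y :
  Rintegral mu D01 (fun x => Kf n s' (y - x)) =
  \sum_(1 <= h0 < H.+1) \sum_s0 \sum_a0
    Rintegral mu setT (fun x => augOcc H P r pi h0 s0 a0 n s' (y - x)) * fd h0 s0 a0.
Proof.
rewrite /Kf Rint_sum //; last first.
  move=> h0; apply: good_sum => s0; apply: good_sum => a0; exact/good_scale/gO.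
apply: eq_bigr => h0 _; rewrite Rint_sum //; last first.
  move=> s0; apply: good_sum => a0; exact/good_scale/gO.
apply: eq_bigr => s0 _; rewrite Rint_sum //; last first.
  move=> a0; exact/good_scale/gO.
apply: eq_bigr => a0 _; rewrite RintegralZr; last 2 first.
- exact: mD01.
- exact/good_int/gO.
by rewrite good_R01 //; exact: gO.
Qed.

Lemma main n : (n <= H)%N -> forall s y, y <= 1 ->
  augV H P r pi n s y - augV H Q r pi n s y <= H%:R * Kf n s y.
Proof.
elim: n => [|n IH] hn s y y1.
  by rewrite subrr; apply: mulr_ge0 => //; exact: Kf_ge0.
have hn' : (n <= H)%N by apply: ltnW.
have hh := @hstep n hn.
set h := (H - n)%N in hh *.
have [pi0 [pi1 mpi]] := hpi _ hh s.
pose J a s' := Rintegral (r h s a) D01 (fun x => Kf n s' (y - x)).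
pose IP a s' := Rintegral (r h s a) setT (fun x => augV H P r pi n s' (y - x)).
pose IQ a s' := Rintegral (r h s a) setT (fun x => augV H Q r pi n s' (y - x)).
have gV : forall K, is_kernel H K -> forall s', good (fun x => augV H K r pi n s' (y - x)).
  move=> K hK s'; have [mV bV] := @V_props K hK _ hn' s'.
  apply: (@good_sub _ _ _ (Num.max y 0)) => // x /andP[x0 x1].
  have /andP[b0 b1] := bV (y - x); rewrite ger0_norm //.
  exact: (le_trans b1 (maxle _ _ x0)).
have F2 : forall a s', IP a s' - IQ a s' <= H%:R * J a s'.
  move=> a s'; rewrite /IP /IQ /J.
  rewrite (@good_R01 _ _ (hr _ hh s a) _ (gV _ hP s')).
  rewrite (@good_R01 _ _ (hr _ hh s a) _ (gV _ hQ s')).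
  rewrite -RintegralB; last 3 first.
  - exact: mD01.
  - exact/good_int/gV.
  - exact/good_int/gV.
  rewrite -RintegralZl; last 2 first.
  - exact: mD01.
  - exact/good_int/gKf.
  apply: le_Rintegral.
  - exact: mD01.
  - apply/good_int/good_B; exact: gV.
  - exact/good_int/good_scalel/gKf.
  move=> x /andP[x0 x1]; apply: IH => //.
  by rewrite (le_trans _ y1) // lerBlDr lerDl.
have FIQ : forall a s', 0 <= IQ a s' <= 1.
  move=> a s'; rewrite /IQ.
  have [mV bV] := @V_props Q hQ _ hn' s'.
  rewrite (@good_R01 _ _ (hr _ hh s a) _ (gV _ hQ s')).
  apply/andP; split; first by apply: Rintegral_ge0 => x _; have /andP[] := bV (y - x).
  apply: (le_trans (y := Rintegral (r h s a) D01 (fun _ => 1))).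
    apply: le_Rintegral; first exact: mD01.
    - exact/good_int/gV.
    - exact: finite_measure_integrable_cst mD01.
    move=> x /andP[x0 x1]; have /andP[_ b1] := bV (y - x).
    apply: (le_trans b1); rewrite ge_max ler01 andbT.
    by rewrite (le_trans _ y1) // lerBlDr lerDl.
  rewrite Rintegral_cst; last exact: mD01.
  rewrite (_ : fine _ = 1) ?mulr1 //; exact: (congr1 fine (hr _ hh s a)).
have Fkf : Kf n.+1 s y = \sum_a pi h s y a * (fd h s a + \sum_s' P h s a s' * J a s').
  have Osplit : forall h0 s0 a0, augOcc H P r pi h0 s0 a0 n.+1 s y =
     (if h == h0 then (if s == s0 then pi h s y a0 else 0) else 0) +
     \sum_a pi h s y a * \sum_s' P h s a s' *
        Rintegral (r h s a) setT (fun x => augOcc H P r pi h0 s0 a0 n s' (y - x)).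
    move=> h0 s0 a0; rewrite augOcc_S -/h; case: eqP => [<-|_]; last by rewrite add0r.
    rewrite (_ : \sum_a _ = 0) ?addr0 //; apply: big1 => a _.
    rewrite (_ : \sum_s' _ = 0) ?mulr0 //; apply: big1 => s' _.
    rewrite (_ : (fun x => _) = fun _ => 0) ?Rint0 ?mulr0 //.
    apply/funext => x; apply: O_zero; rewrite /h; lia.
  rewrite /Kf.
  under eq_bigr => h0 _ do under eq_bigr => s0 _ do under eq_bigr => a0 _ do rewrite Osplit mulrDl.
  under eq_bigr => h0 _ do under eq_bigr => s0 _ do rewrite big_split.
  under eq_bigr => h0 _ do rewrite big_split.
  rewrite big_split /=.
  under [RHS]eq_bigr => a _ do rewrite mulrDr.
  rewrite big_split /=.
  congr (_ + _).
    have hmem : h \in index_iota 1 H.+1.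
      rewrite mem_index_iota; apply/andP; split; [by case/andP: hh | by rewrite ltnS; case/andP: hh].
    rewrite (bigD1_seq h hmem (iota_uniq _ _)) /=.
    rewrite [X in _ + X]big1 ?addr0; last first.
      move=> h0 hne; apply: big1 => s0 _; apply: big1 => a0 _.
      by rewrite eq_sym (negbTE hne) mul0r.
    rewrite eqxx (bigD1 s) //= eqxx [X in _ + X]big1 ?addr0 //.
    move=> s0 hs0; apply: big1 => a0 _.
    by rewrite eq_sym (negbTE hs0) mul0r.
  transitivity (\sum_a pi h s y a * \sum_s' P h s a s' *
     (\sum_(1 <= h0 < H.+1) \sum_s0 \sum_a0
       Rintegral (r h s a) setT (fun x => augOcc H P r pi h0 s0 a0 n s' (y - x)) * fd h0 s0 a0)); last first.
    apply: eq_bigr => a _; congr (_ * _); apply: eq_bigr => s' _; congr (_ * _).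
    by rewrite /J (@Jexp _ hn' _ (hr _ hh s a)).
  under [RHS]eq_bigr => a _ do rewrite swap_lin.
  rewrite swap_lin; apply: eq_bigr => h0 _; apply: eq_bigr => s0 _; apply: eq_bigr => a0 _.
  rewrite big_distrl; apply: eq_bigr => a _ /=; rewrite -mulrA big_distrl; congr (_ * _).
  by apply: eq_bigr => s' _ /=; rewrite mulrA.
rewrite !augV_S -/h -sumrB Fkf mulr_sumr; apply: ler_sum => a _.
rewrite -mulrBr mulrCA; apply: ler_wpM2l; first exact: pi0.
rewrite -sumrB /fd mulrDr !mulr_sumr -big_split; apply: ler_sum => s' _ /=.
have [P0 _] := hP _ hh s a.
rewrite (_ : P h s a s' * _ - Q h s a s' * _ =
   (P h s a s' - Q h s a s') * IQ a s' + P h s a s' * (IP a s' - IQ a s')); last first.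
  by rewrite /IP /IQ; ring.
apply: lerD.
  apply: (le_trans (ler_norm _)); rewrite normrM.
  have /andP[q0 q1] := FIQ a s'.
  rewrite (ger0_norm q0).
  apply: (le_trans (y := `|P h s a s' - Q h s a s'| * 1)); first by rewrite ler_wpM2l.
  rewrite mulr1 ler_peMl // ler1n; lia.
rewrite mulrCA; apply: ler_wpM2l => //; exact: F2.
Qed.

End Main.
End MDP.

Theorem lemma3 (R : realType) (S A : finType) (H : nat)
  (P Phat : nat -> S -> A -> S -> R)
  (r : nat -> S -> A -> probability R R)
  (pi : nat -> S -> R -> A -> R) (s1 : S) (c : R) :
  is_kernel H P -> is_kernel H Phat ->
  (forall h, (0 < h <= H)%N -> forall s a,
     r h s a [set x : R | 0 <= x <= 1] = 1%E) ->
  is_aug_policy H pi ->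
  0 <= c <= 1 ->
  V1 H P r pi s1 c - V1 H Phat r pi s1 c <=
  H%:R * \sum_(1 <= h < H.+1)
           \sum_(s : S) \sum_(a : A)
             occ H P r pi s1 c h s a *
             \sum_(s' : S) `|P h s a s' - Phat h s a s'|.
Proof.
move=> hP hQ hr hpi /andP[c0 c1].
exact: (@main R S A H r pi hr hpi P Phat hP hQ H (leqnn H) s1 c c1).
Qed.
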